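(* Let $L$ be a frame. The category $L$-$\mathbf{SLSCSob}$, whose objects are the strong locally super-compact $L$-sober spaces and whose morphisms are continuous maps, is isomorphic to the category $L$-$\mathbf{AlgDom}$, whose objects are the algebraic $L$-dcpo's and whose morphisms are Scott continuous maps.
   Context: $L$ is a frame with implication $\to$. An $L$-subset of $X$ is a map $X\to L$; it is nonempty if $\bigvee_xA(x)=1$; $a_X$ is the constant $L$-subset with value $a$. ${\rm sub}_X(A,B)=\bigwedge_x A(x)\to B(x)$. $f^\rightarrow(A)(y)=\bigvee_{f(x)=y}A(x)$, $f^\leftarrow(B)=B\circ f$. An $L$-topology on $X$ is $\mathcal O(X)\subseteq L^X$ closed under finite meets and arbitrary joins containing all constants $a_X$; members are open. A map is continuous if $f^\leftarrow$ maps open sets to open sets. A base is $\mathcal B\subseteq\mathcal O(X)$ with $A=\bigvee_{B\in\mathcal B}{\rm sub}_X(B,A)\wedge B$ for every open $A$. An $L$-order on $P$: $e:P\times P\to L$ with $e(x,x)=1$, $e(x,y)\wedge e(y,z)\le e(x,z)$, $e(x,y)\wedge e(y,x)=1\Rightarrow x=y$. ${\downarrow}y(x)=e(x,y)$. $x=\sqcup A$ if $e(x,y)={\rm sub}_P(A,{\downarrow}y)$ for all $y$. Directed: nonempty and $D(x)\wedge D(y)\le\bigvee_z D(z)\wedge e(x,z)\wedge e(y,z)$; ideal = directed lower set ($I(x)\wedge e(y,x)\le I(y)$). $L$-dcpo: every directed $L$-subset has a supremum. Scott continuous $f$: for every directed $D$ with a supremum, $f^\rightarrow(D)$ has a supremum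 and $f(\sqcup D)=\sqcup f^\rightarrow(D)$. ${\Downarrow}x(y)=\bigwedge\{e(x,\sqcup I)\to I(y): I\text{ ideal with a supremum}\}$. In an $L$-dcpo $P$, $x$ is compact if ${\Downarrow}x(x)=1$; $K(P)$ is the set of compact elements; $k(x)\in L^P$ is $k(x)(y)=e(y,x)$ for $y\in K(P)$ and $0$ otherwise; $P$ is an algebraic $L$-dcpo if each $k(x)$ is directed and $\sqcup k(x)=x$. A super-compact $L$-subset is a nonempty $A$ with ${\rm sub}_X(A,\bigvee_iV_i)=\bigvee_i{\rm sub}_X(A,V_i)$ for every family of open $V_i$. $X$ is strong locally super-compact if it has a base consisting of super-compact open sets. A point of $\mathcal O(X)$ is $p:\mathcal O(X)\to L$ preserving binary meets, arbitrary joins, and with $p(\lambda_X)=\lambda$ for all $\lambda\in L$. $[x](A)=A(x)$. $X$ is $L$-sober if $x\mapsto[x]$ is a bijection onto the set of points. *)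

(* Defs.v *)
Record frame := Frame {
  fcar :> Type;
  fle : fcar -> fcar -> Prop;
  fmeet : fcar -> fcar -> fcar;
  fsup : (fcar -> Prop) -> fcar;
  fle_refl : forall a, fle a a;
  fle_trans : forall a b c, fle a b -> fle b c -> fle a c;
  fle_antisym : forall a b, fle a b -> fle b a -> a = b;
  fmeet_lb1 : forall a b, fle (fmeet a b) a;
  fmeet_lb2 : forall a b, fle (fmeet a b) b;
  fmeet_glb : forall a b c, fle c a -> fle c b -> fle c (fmeet a b);
  fsup_ub : forall (S : fcar -> Prop) a, S a -> fle a (fsup S);
  fsup_least : forall (S : fcar -> Prop) c,
      (forall a, S a -> fle a c) -> fle (fsup S) c;
  fdistr : forall a (S : fcar -> Prop),
      fmeet a (fsup S) = fsup (fun b => exists c, S c /\ b = fmeet a c)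
}.

Section FrameOps.
Variable L : frame.

Definition ftop : L := fsup L (fun _ => True).
Definition fbot : L := fsup L (fun _ => False).
Definition finf (S : L -> Prop) : L :=
  fsup L (fun c => forall a, S a -> fle L c a).
Definition fimp (a b : L) : L := fsup L (fun c => fle L (fmeet L c a) b).

Definition fjoin {I : Type} (f : I -> L) : L := fsup L (fun a => exists i, a = f i).
Definition fmeetI {I : Type} (f : I -> L) : L := finf (fun a => exists i, a = f i).
End FrameOps.

Arguments ftop {L}.
Arguments fbot {L}.
Arguments finf {L}.
Arguments fimp {L}.
Arguments fjoin {L I}.
Arguments fmeetI {L I}.

Section LSubsets.
Variable L : frame.

Definition Lnonempty {X : Type} (A : X -> L) : Prop := fjoin A = ftop.
Definition Lconst (X : Type) (a : L) : X -> L := fun _ => a.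
Definition Lsub {X : Type} (A B : X -> L) : L := fmeetI (fun x => fimp (A x) (B x)).
Definition Lfwd {X Y : Type} (f : X -> Y) (A : X -> L) : Y -> L :=
  fun y => fjoin (fun x : {x : X | f x = y} => A (proj1_sig x)).
Definition Lbwd {X Y : Type} (f : X -> Y) (B : Y -> L) : X -> L := fun x => B (f x).
Definition Lsupset {X : Type} (S : (X -> L) -> Prop) : X -> L :=
  fun x => fsup L (fun a => exists A, S A /\ a = A x).
Definition Lmeet2 {X : Type} (A B : X -> L) : X -> L := fun x => fmeet L (A x) (B x).

Definition is_Ltopology {X : Type} (O : (X -> L) -> Prop) : Prop :=
  (forall A B, O A -> O B -> O (Lmeet2 A B)) /\
  (forall S : (X -> L) -> Prop, (forall A, S A -> O A) -> O (Lsupset S)) /\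
  (forall a : L, O (Lconst X a)).

Definition Lcontinuous {X Y : Type} (OX : (X -> L) -> Prop) (OY : (Y -> L) -> Prop)
  (f : X -> Y) : Prop := forall B, OY B -> OX (Lbwd f B).

Definition is_base {X : Type} (O : (X -> L) -> Prop) (Bs : (X -> L) -> Prop) : Prop :=
  (forall B, Bs B -> O B) /\
  (forall A, O A -> forall x,
     A x = fjoin (fun B : {B : X -> L | Bs B} =>
                    fmeet L (Lsub (proj1_sig B) A) (proj1_sig B x))).

(* super-compact L-subset; a family of open sets is given by its set of members *)
Definition super_compact {X : Type} (O : (X -> L) -> Prop) (A : X -> L) : Prop :=
  Lnonempty A /\
  forall S : (X -> L) -> Prop, (forall V, S V -> O V) ->
    Lsub A (Lsupset S) = fjoin (fun V : {V : X -> L | S V} => Lsub A (proj1_sig V)).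

Definition strong_loc_super_compact {X : Type} (O : (X -> L) -> Prop) : Prop :=
  exists Bs, is_base O Bs /\ (forall B, Bs B -> O B /\ super_compact O B).

(* points of O(X): maps O(X) -> L (represented by maps on all L-subsets,
   only their values on open sets matter) *)
Definition is_point {X : Type} (O : (X -> L) -> Prop) (p : (X -> L) -> L) : Prop :=
  (forall A B, O A -> O B -> p (Lmeet2 A B) = fmeet L (p A) (p B)) /\
  (forall S : (X -> L) -> Prop, (forall A, S A -> O A) ->
     p (Lsupset S) = fsup L (fun a => exists A, S A /\ a = p A)) /\
  (forall l : L, p (Lconst X l) = l).

(* L-sober: x |-> [x] is a bijection onto the set of points
   (points being maps on O(X), compared on open sets) *)
Definition Lsober {X : Type} (O : (X -> L) -> Prop) : Prop :=
  (forall x y : X, (forall A, O A -> A x = A y) -> x = y) /\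
  (forall p, is_point O p -> exists x : X, forall A, O A -> p A = A x).

Definition is_Lorder {P : Type} (e : P -> P -> L) : Prop :=
  (forall x, e x x = ftop) /\
  (forall x y z, fle L (fmeet L (e x y) (e y z)) (e x z)) /\
  (forall x y, fmeet L (e x y) (e y x) = ftop -> x = y).

Definition Ldown {P : Type} (e : P -> P -> L) (y : P) : P -> L := fun x => e x y.

Definition is_Lsup {P : Type} (e : P -> P -> L) (A : P -> L) (x : P) : Prop :=
  forall y, e x y = Lsub A (Ldown e y).

Definition Ldirected {P : Type} (e : P -> P -> L) (D : P -> L) : Prop :=
  Lnonempty D /\
  forall x y, fle L (fmeet L (D x) (D y))
                    (fjoin (fun z => fmeet L (D z) (fmeet L (e x z) (e y z)))).

Definition Lideal {P : Type} (e : P -> P -> L) (I : P -> L) : Prop :=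
  Ldirected e I /\ forall x y, fle L (fmeet L (I x) (e y x)) (I y).

Definition Ldcpo {P : Type} (e : P -> P -> L) : Prop :=
  forall D, Ldirected e D -> exists x, is_Lsup e D x.

Definition Scott_continuous {P Q : Type} (e : P -> P -> L) (e' : Q -> Q -> L)
  (f : P -> Q) : Prop :=
  forall D, Ldirected e D -> forall x, is_Lsup e D x ->
    exists s, is_Lsup e' (Lfwd f D) s /\ f x = s.

Definition Lwaybelow {P : Type} (e : P -> P -> L) (x y : P) : L :=
  finf (fun a => exists I s, Lideal e I /\ is_Lsup e I s /\ a = fimp (e x s) (I y)).

Definition Lcompact {P : Type} (e : P -> P -> L) (x : P) : Prop :=
  Lwaybelow e x x = ftop.

(* k(x)(y) = e(y,x) if y compact, 0 otherwise; written as the join of the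
   subset {e(y,x) | y compact}, which is e(y,x) or the empty join 0 *)
Definition Lk {P : Type} (e : P -> P -> L) (x : P) : P -> L :=
  fun y => fsup L (fun a => Lcompact e y /\ a = e y x).

Definition Lalgebraic {P : Type} (e : P -> P -> L) : Prop :=
  Ldcpo e /\ forall x, Ldirected e (Lk e x) /\ is_Lsup e (Lk e x) x.

End LSubsets.

Record SLSCSob (L : frame) := MkSLSCSob {
  sp_car : Type;
  sp_open : (sp_car -> L) -> Prop;
  sp_top : is_Ltopology L sp_open;
  sp_slsc : strong_loc_super_compact L sp_open;
  sp_sober : Lsober L sp_open
}.
Arguments sp_car {L}.
Arguments sp_open {L}.

Definition SLSCSob_hom {L : frame} (X Y : SLSCSob L) : Type :=
  {f : sp_car X -> sp_car Y | Lcontinuous L (sp_open X) (sp_open Y) f}.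

Record AlgDom (L : frame) := MkAlgDom {
  ad_car : Type;
  ad_ord : ad_car -> ad_car -> L;
  ad_Lorder : is_Lorder L ad_ord;
  ad_alg : Lalgebraic L ad_ord
}.
Arguments ad_car {L}.
Arguments ad_ord {L}.

Definition AlgDom_hom {L : frame} (P Q : AlgDom L) : Type :=
  {f : ad_car P -> ad_car Q | Scott_continuous L (ad_ord P) (ad_ord Q) f}.

(* A category given by objects, homs (concrete: subsets of functions),
   identities and composition being those of functions. *)
Definition bijective_map {A B : Type} (f : A -> B) : Prop :=
  exists g : B -> A, (forall a, g (f a) = a) /\ (forall b, f (g b) = b).

Definition SLSCSob_AlgDom_isomorphic (L : frame) : Prop :=
  exists (Fo : SLSCSob L -> AlgDom L)
         (Fm : forall X Y : SLSCSob L, SLSCSob_hom X Y -> AlgDom_hom (Fo X) (Fo Y)),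
    (forall X (i : SLSCSob_hom X X), (forall x, proj1_sig i x = x) ->
        forall p, proj1_sig (Fm X X i) p = p) /\
    (forall X Y Z (f : SLSCSob_hom X Y) (g : SLSCSob_hom Y Z) (h : SLSCSob_hom X Z),
        (forall x, proj1_sig h x = proj1_sig g (proj1_sig f x)) ->
        forall p, proj1_sig (Fm X Z h) p =
                  proj1_sig (Fm Y Z g) (proj1_sig (Fm X Y f) p)) /\
    bijective_map Fo /\
    (forall X Y, bijective_map (Fm X Y)).

(* Main.v *)
Require Import Defs.
From Stdlib Require Import FunctionalExtensionality PropExtensionality ProofIrrelevance.

Section F.
Context {L : frame}.
Local Notation "a ⊑ b" := (fle L a b) (at level 70).
Local Notation "a ⊓ b" := (fmeet L a b) (at level 40, left associativity).

Lemma le_refl a : a ⊑ a. Proof. apply fle_refl. Qed.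
Lemma le_trans a b c : a ⊑ b -> b ⊑ c -> a ⊑ c. Proof. apply fle_trans. Qed.
Lemma top_max a : a ⊑ ftop. Proof. unfold ftop. apply fsup_ub. exact I. Qed.
Lemma bot_min a : fbot ⊑ a. Proof. unfold fbot. apply fsup_least. intros ? []. Qed.
Lemma add_fact X c Y : X ⊑ c -> X ⊓ c ⊑ Y -> X ⊑ Y.
Proof. intros H1 H2. eapply le_trans; [|exact H2]. apply fmeet_glb; [apply le_refl|exact H1]. Qed.

Lemma imp_adj1 c a b : c ⊓ a ⊑ b -> c ⊑ fimp a b.
Proof. intros H. unfold fimp. apply fsup_ub with (S := fun c => c ⊓ a ⊑ b). exact H. Qed.
Lemma imp_adj2 c a b : c ⊑ fimp a b -> c ⊓ a ⊑ b.
Proof.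
  intros H. apply le_trans with (a ⊓ fimp a b).
  - apply fmeet_glb; [apply fmeet_lb2|]. eapply le_trans; [apply fmeet_lb1|exact H].
  - unfold fimp. rewrite fdistr. apply fsup_least. intros y [z [Hz ->]].
    eapply le_trans; [|exact Hz]. apply fmeet_glb; [apply fmeet_lb2|apply fmeet_lb1].
Qed.

Lemma join_ub {I} (f : I -> L) i : f i ⊑ fjoin f.
Proof. unfold fjoin. apply fsup_ub with (S := fun a => exists i, a = f i). eauto. Qed.
Lemma join_ub' {I} (f : I -> L) i X : X ⊑ f i -> X ⊑ fjoin f.
Proof. intros H; eapply le_trans; [exact H|apply join_ub]. Qed.
Lemma join_least {I} (f : I -> L) c : (forall i, f i ⊑ c) -> fjoin f ⊑ c.
Proof. intros H. unfold fjoin. apply fsup_least. intros a [i ->]. apply H. Qed.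
Lemma sup_ub' (S : L -> Prop) a X : S a -> X ⊑ a -> X ⊑ fsup L S.
Proof. intros H1 H2; eapply le_trans; [exact H2|apply fsup_ub; exact H1]. Qed.

Lemma swap_le a b c : b ⊓ a ⊑ c -> a ⊓ b ⊑ c.
Proof. intros H; eapply le_trans; [|exact H]. apply fmeet_glb; [apply fmeet_lb2|apply fmeet_lb1]. Qed.

Lemma join_elim {I} (f : I -> L) b c : (forall i, f i ⊓ b ⊑ c) -> fjoin f ⊓ b ⊑ c.
Proof.
  intros H. apply imp_adj2. apply join_least. intros i. apply imp_adj1. apply H.
Qed.
Lemma join_elimR {I} (f : I -> L) b c : (forall i, b ⊓ f i ⊑ c) -> b ⊓ fjoin f ⊑ c.
Proof. intros H. apply swap_le, join_elim. intros i; apply swap_le, H. Qed.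
Lemma sup_elim (S : L -> Prop) b c : (forall a, S a -> a ⊓ b ⊑ c) -> fsup L S ⊓ b ⊑ c.
Proof.
  intros H. apply imp_adj2. apply fsup_least. intros a Ha. apply imp_adj1. apply H, Ha.
Qed.
Lemma sup_elimR (S : L -> Prop) b c : (forall a, S a -> b ⊓ a ⊑ c) -> b ⊓ fsup L S ⊑ c.
Proof. intros H. apply swap_le, sup_elim. intros a Ha; apply swap_le, H, Ha. Qed.

Lemma finf_lb (S : L -> Prop) a : S a -> finf S ⊑ a.
Proof. intros H. unfold finf. apply fsup_least. intros c Hc. apply Hc, H. Qed.
Lemma finf_glb (S : L -> Prop) c : (forall a, S a -> c ⊑ a) -> c ⊑ finf S.
Proof. intros H. unfold finf. apply fsup_ub with (S := fun c => forall a, S a -> c ⊑ a). exact H. Qed.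
Lemma meetI_lb {I} (f : I -> L) i : fmeetI f ⊑ f i.
Proof. unfold fmeetI. apply finf_lb. eauto. Qed.
Lemma meetI_glb {I} (f : I -> L) c : (forall i, c ⊑ f i) -> c ⊑ fmeetI f.
Proof. intros H. unfold fmeetI. apply finf_glb. intros a [i ->]. apply H. Qed.

Lemma Lsub_elim {X} (A B : X -> L) x : Lsub L A B ⊓ A x ⊑ B x.
Proof. apply imp_adj2. unfold Lsub. apply (meetI_lb (fun x => fimp (A x) (B x))). Qed.
Lemma Lsub_intro {X} (A B : X -> L) c : (forall x, c ⊓ A x ⊑ B x) -> c ⊑ Lsub L A B.
Proof. intros H. unfold Lsub. apply meetI_glb. intros x. apply imp_adj1, H. Qed.

Lemma eq_le a b : a ⊑ b -> b ⊑ a -> a = b. Proof. apply fle_antisym. Qed.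
Lemma top_eq a : ftop ⊑ a -> a = ftop. Proof. intros; apply eq_le; auto using top_max. Qed.
End F.

Ltac mle := solve [ apply fle_refl | apply top_max
  | apply fmeet_glb; mle
  | eapply fle_trans; [apply fmeet_lb1|]; mle
  | eapply fle_trans; [apply fmeet_lb2|]; mle ].
Ltac addH H := eapply add_fact; [eapply fle_trans; [|apply H]; mle|].
Ltac jub t := apply join_ub' with (i := t); cbv beta; cbn [proj1_sig].

Tactic Notation "jel" simple_intropattern(p) :=
  match goal with |- fle ?Lf ?X ?Y =>
    match X with context C [fjoin ?f] =>
      let X' := context C [@ftop Lf] in
      apply (@le_trans Lf _ (fmeet Lf (fjoin f) X') _); [mle | apply join_elim; intros p; cbv beta; cbn [proj1_sig]]
    end end.
Tactic Notation "sel" simple_intropattern(p) simple_intropattern(q) :=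
  match goal with |- fle ?Lf ?X ?Y =>
    match X with context C [fsup ?Lg ?S] =>
      let X' := context C [@ftop Lf] in
      apply (@le_trans Lf _ (fmeet Lf (fsup Lg S) X') _); [mle | apply sup_elim; intros p q; cbv beta]
    end end.

Section Ord.
Variable L : frame.
Local Notation "a ⊑ b" := (fle L a b) (at level 70).
Local Notation "a ⊓ b" := (fmeet L a b) (at level 40, left associativity).

Lemma Lfwd_ub {X Y} (f : X -> Y) (D : X -> L) x : D x ⊑ Lfwd L f D (f x).
Proof. unfold Lfwd. apply (join_ub (fun x0 : {x0 | f x0 = f x} => D (proj1_sig x0)) (exist _ x eq_refl)). Qed.
Lemma Lfwd_elim {X Y} (f : X -> Y) (D : X -> L) y b c :
  (forall x, f x = y -> D x ⊓ b ⊑ c) -> Lfwd L f D y ⊓ b ⊑ c.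
Proof. intros H. unfold Lfwd. apply join_elim. intros [x Hx]. apply H, Hx. Qed.

Variables (P : Type) (e : P -> P -> L) (Ho : is_Lorder L e).

Lemma e_refl x : e x x = ftop. Proof. apply Ho. Qed.
Lemma e_refl_le X x : X ⊑ e x x. Proof. rewrite e_refl. apply top_max. Qed.
Lemma e_trans x y z : e x y ⊓ e y z ⊑ e x z. Proof. apply Ho. Qed.
Lemma e_antisym x y : e x y = ftop -> e y x = ftop -> x = y.
Proof. intros H1 H2. apply Ho. rewrite H1, H2. apply top_eq. mle. Qed.

Lemma sup_ub D s x : is_Lsup L e D s -> D x ⊑ e x s.
Proof. intros H. apply le_trans with (Lsub L D (Ldown L e s) ⊓ D x).
  - apply fmeet_glb; [|apply le_refl]. rewrite <- H. apply e_refl_le.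
  - apply (Lsub_elim D (Ldown L e s) x). Qed.
Lemma sup_elim' D s x y : is_Lsup L e D s -> e s y ⊓ D x ⊑ e x y.
Proof. intros H. rewrite H. apply (Lsub_elim D (Ldown L e y)). Qed.
Lemma sup_intro D s y c : is_Lsup L e D s -> (forall x, c ⊓ D x ⊑ e x y) -> c ⊑ e s y.
Proof. intros H Hc. rewrite H. apply Lsub_intro. exact Hc. Qed.
Lemma sup_unique D s s' : is_Lsup L e D s -> is_Lsup L e D s' -> s = s'.
Proof. intros H1 H2. apply e_antisym.
  - apply top_eq. apply (sup_intro D); auto. intros x. eapply le_trans; [apply fmeet_lb2|]. apply sup_ub; auto.
  - apply top_eq. apply (sup_intro D); auto. intros x. eapply le_trans; [apply fmeet_lb2|]. apply sup_ub; auto.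
Qed.

Lemma dir_ne D : Ldirected L e D -> fjoin D = ftop. Proof. intros [H _]; exact H. Qed.
Lemma dir_ne_le D X : Ldirected L e D -> X ⊑ fjoin D. Proof. intros H; rewrite dir_ne; auto; apply top_max. Qed.
Lemma dir_dir D x y : Ldirected L e D ->
  D x ⊓ D y ⊑ fjoin (fun z => D z ⊓ (e x z ⊓ e y z)).
Proof. intros [_ H]; apply H. Qed.

Definition downset (D : P -> L) : P -> L := fun y => fjoin (fun x => D x ⊓ e y x).
Lemma downset_ge D x : D x ⊑ downset D x.
Proof. unfold downset. jub x. apply fmeet_glb; [apply le_refl|apply e_refl_le]. Qed.

Lemma downset_ideal D : Ldirected L e D -> Lideal L e (downset D).
Proof.
  intros HD. split; [split|].
  - apply top_eq. rewrite <- (dir_ne D HD). apply join_least. intros x.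
    eapply le_trans; [apply downset_ge|]. apply (join_ub (downset D)).
  - intros y y'. unfold downset. jel x. jel x'.
    addH (dir_dir D x x' HD). jel z. jub z. apply fmeet_glb.
    + jub z. apply fmeet_glb; [mle|apply e_refl_le].
    + apply fmeet_glb.
      * addH (e_trans y x z). mle.
      * addH (e_trans y' x' z). mle.
  - intros x y. unfold downset. jel z. jub z. apply fmeet_glb; [mle|].
    addH (e_trans y x z). mle.
Qed.

Lemma downset_sup D s : is_Lsup L e D s -> is_Lsup L e (downset D) s.
Proof.
  intros H y. apply eq_le.
  - apply Lsub_intro. intros z. unfold Ldown, downset. jel x.
    addH (sup_elim' D s x y H). addH (e_trans z x y). mle.
  - apply (sup_intro D); auto. intros x. addH (downset_ge D x).
    eapply le_trans; [|apply (Lsub_elim (downset D) (Ldown L e y) x)]. mle.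
Qed.

Lemma principal_dir x : Ldirected L e (Ldown L e x).
Proof. split.
  - apply top_eq. unfold Ldown. jub x. apply e_refl_le.
  - intros y z. unfold Ldown. jub x. apply fmeet_glb; [apply e_refl_le|mle]. Qed.
Lemma principal_sup x : is_Lsup L e (Ldown L e x) x.
Proof. intros y. apply eq_le.
  - apply Lsub_intro. intros z. unfold Ldown. addH (e_trans z x y). mle.
  - eapply le_trans; [|apply (Lsub_elim (Ldown L e x) (Ldown L e y) x)].
    apply fmeet_glb; [apply le_refl|]. unfold Ldown. apply e_refl_le. Qed.
End Ord.

Definition spec {L : frame} {X : Type} (O : (X -> L) -> Prop) (x y : X) : L :=
  fmeetI (fun A : {A | O A} => fimp (proj1_sig A x) (proj1_sig A y)).
Definition Oe {L : frame} {P : Type} (e : P -> P -> L) (U : P -> L) : Prop :=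
  forall x, U x = fjoin (fun c : {c | Lcompact L e c} => fmeet L (U (proj1_sig c)) (e (proj1_sig c) x)).

Section Alg.
Set Default Proof Using "All".
Context {L : frame}.
Local Notation "a ⊑ b" := (fle L a b) (at level 70).
Local Notation "a ⊓ b" := (fmeet L a b) (at level 40, left associativity).
Context {P : Type} (e : P -> P -> L) (Ho : is_Lorder L e) (Halg : Lalgebraic L e).
Local Notation K := (Lcompact L e).

Lemma Lk_le x y : Lk L e x y ⊑ e y x.
Proof. unfold Lk. apply fsup_least. intros a [_ ->]. apply le_refl. Qed.
Lemma Lk_eq x y : K y -> Lk L e x y = e y x.
Proof. intros H. apply eq_le; [apply Lk_le|]. unfold Lk. apply fsup_ub with (S := fun a => K y /\ a = e y x). auto. Qed.
Lemma Lk_elim x y b c : (K y -> e y x ⊓ b ⊑ c) -> Lk L e x y ⊓ b ⊑ c.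
Proof. intros H. unfold Lk. apply sup_elim. intros a [Hk ->]. auto. Qed.

Lemma k_dir_ x : Ldirected L e (Lk L e x). Proof. apply Halg. Qed.
Lemma k_sup_ x : is_Lsup L e (Lk L e x) x. Proof. apply Halg. Qed.

Lemma k_ne_le X x : X ⊑ fjoin (fun c : {c | K c} => e (proj1_sig c) x).
Proof.
  eapply le_trans; [apply (dir_ne_le L P e (Lk L e x) X (k_dir_ x))|].
  apply join_least. intros y. unfold Lk. apply fsup_least. intros a [Hk ->].
  jub (exist _ y Hk). apply le_refl.
Qed.
Lemma k_dir x c d : K c -> K d ->
  e c x ⊓ e d x ⊑ fjoin (fun b : {b | K b} => e (proj1_sig b) x ⊓ (e c (proj1_sig b) ⊓ e d (proj1_sig b))).
Proof.
  intros Hc Hd. rewrite <- (Lk_eq x c Hc), <- (Lk_eq x d Hd).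
  eapply le_trans; [apply (dir_dir L P e (Lk L e x) c d (k_dir_ x))|].
  apply join_least. intros z. apply Lk_elim. intros Hz. jub (exist _ z Hz). apply le_refl.
Qed.
Lemma k_sup_intro m x y : (forall c, K c -> m ⊓ e c x ⊑ e c y) -> m ⊑ e x y.
Proof.
  intros H. apply (sup_intro L P e (Lk L e x) x y m (k_sup_ x)).
  intros z. apply swap_le, Lk_elim. intros Hz. apply swap_le, H, Hz.
Qed.
Lemma compact_elim c I s : K c -> Lideal L e I -> is_Lsup L e I s -> e c s ⊑ I c.
Proof.
  intros Hc HI Hs. unfold Lcompact, Lwaybelow in Hc.
  assert (H : ftop ⊑ fimp (e c s) (I c)).
  { rewrite <- Hc. apply finf_lb. exists I, s. auto. }
  eapply le_trans; [|apply (imp_adj2 _ _ _ H)]. mle.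
Qed.

Lemma Oe_ge U c x : Oe e U -> K c -> U c ⊓ e c x ⊑ U x.
Proof.
  intros HU Hc. rewrite (HU x). jub (exist _ c Hc). apply le_refl.
Qed.
Lemma Oe_upper U x y : Oe e U -> U x ⊓ e x y ⊑ U y.
Proof.
  intros HU. rewrite (HU x). jel [c Hc]. addH (e_trans L P e Ho c x y).
  eapply le_trans; [|apply (Oe_ge U c y HU Hc)]. mle.
Qed.

Lemma Oe_scott U D s : Oe e U -> Ldirected L e D -> is_Lsup L e D s ->
  U s = fjoin (fun x => D x ⊓ U x).
Proof.
  intros HU HD Hs. apply eq_le.
  - rewrite (HU s). jel [c Hc].
    addH (compact_elim c (downset L P e D) s Hc (downset_ideal L P e Ho D HD) (downset_sup L P e Ho D s Hs)).
    unfold downset. jel x. jub x. apply fmeet_glb; [mle|].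
    eapply le_trans; [|apply (Oe_ge U c x HU Hc)]. mle.
  - apply join_least. intros x. addH (sup_ub L P e Ho D s x Hs).
    eapply le_trans; [|apply (Oe_upper U x s HU)]. mle.
Qed.

Lemma Oe_top : is_Ltopology L (Oe e).
Proof.
  split; [|split].
  - intros U V HU HV x. unfold Lmeet2. apply eq_le.
    + rewrite (HU x), (HV x). jel [c Hc]. jel [d Hd]. addH (k_dir x c d Hc Hd).
      jel [b Hb]. jub (exist _ b Hb). apply fmeet_glb; [apply fmeet_glb|mle].
      * eapply le_trans; [|apply (Oe_ge U c b HU Hc)]. mle.
      * eapply le_trans; [|apply (Oe_ge V d b HV Hd)]. mle.
    + apply join_least. intros [c Hc]. cbn. apply fmeet_glb.
      * eapply le_trans; [|apply (Oe_ge U c x HU Hc)]. mle.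
      * eapply le_trans; [|apply (Oe_ge V c x HV Hc)]. mle.
  - intros S HS x. apply eq_le.
    + unfold Lsupset at 1. apply fsup_least. intros a [A [HA ->]].
      rewrite (HS A HA x). apply join_least. intros [c Hc]. jub (exist _ c Hc).
      apply fmeet_glb; [|mle]. unfold Lsupset. eapply sup_ub'; [exists A; split; [exact HA|reflexivity]|]. mle.
    + apply join_least. intros [c Hc]. cbn. unfold Lsupset. sel a [A [HA ->]].
      eapply sup_ub'; [exists A; split; [exact HA|reflexivity]|].
      eapply le_trans; [|apply (Oe_ge A c x (HS A HA) Hc)]. mle.
  - intros a x. unfold Lconst. apply eq_le.
    + addH (k_ne_le a x). jel [c Hc]. jub (exist _ c Hc). mle.
    + apply join_least. intros [c Hc]. cbn. mle.
Qed.

Lemma Oe_up c : K c -> Oe e (fun x => e c x).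
Proof.
  intros Hc x. apply eq_le.
  - jub (exist _ c Hc). apply fmeet_glb; [apply e_refl_le; exact Ho|apply le_refl].
  - apply join_least. intros [d Hd]. cbn. apply (e_trans L P e Ho).
Qed.
Lemma Oe_sub A c : Oe e A -> Lsub L (fun x => e c x) A = A c.
Proof.
  intros HA. apply eq_le.
  - eapply le_trans; [|apply (Lsub_elim (fun x => e c x) A c)].
    apply fmeet_glb; [apply le_refl|apply e_refl_le; exact Ho].
  - apply Lsub_intro. intros x. apply Oe_upper, HA.
Qed.

Lemma spec_Oe x y : spec (Oe e) x y = e x y.
Proof.
  apply eq_le.
  - apply k_sup_intro. intros c Hc. apply imp_adj2.
    apply (meetI_lb (fun A : {A | Oe e A} => fimp (proj1_sig A x) (proj1_sig A y))
                    (exist _ (fun z => e c z) (Oe_up c Hc))).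
  - apply meetI_glb. intros [A HA]. cbn. apply imp_adj1. apply swap_le, Oe_upper, HA.
Qed.

Lemma Oe_slsc : strong_loc_super_compact L (Oe e).
Proof.
  exists (fun B => exists c, K c /\ B = (fun x => e c x)).
  assert (HB : forall B, (exists c, K c /\ B = (fun x => e c x)) -> Oe e B).
  { intros B [c [Hc ->]]. apply Oe_up, Hc. }
  split; [split|].
  - exact HB.
  - intros A HA x. apply eq_le.
    + rewrite (HA x). apply join_least. intros [c Hc]. cbn.
      jub (exist (fun B => exists c, K c /\ B = (fun x => e c x)) (fun z => e c z) (ex_intro _ c (conj Hc eq_refl))).
      rewrite Oe_sub by exact HA. apply le_refl.
    + apply join_least. intros [B [c [Hc ->]]]. cbn. rewrite Oe_sub by exact HA.
      apply Oe_ge; auto.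
  - intros B HB'. split; [apply HB, HB'|]. destruct HB' as [c [Hc ->]]. split.
    + apply top_eq. unfold Lnonempty. jub c. apply e_refl_le; exact Ho.
    + intros S HS. rewrite Oe_sub by (apply Oe_top; exact HS). apply eq_le.
      * unfold Lsupset. apply fsup_least. intros a [V [HV ->]]. jub (exist _ V HV).
        rewrite Oe_sub by (apply HS, HV). apply le_refl.
      * apply join_least. intros [V HV]. cbn. rewrite Oe_sub by (apply HS, HV).
        unfold Lsupset. eapply sup_ub'; [exists V; split; [exact HV|reflexivity]|]. apply le_refl.
Qed.

Lemma Oe_sober : Lsober L (Oe e).
Proof.
  destruct Oe_top as [Tm [Ts Tc]].
  split.
  - intros x y H. apply (e_antisym L P e Ho).
    + rewrite <- (spec_Oe x y). apply top_eq. apply meetI_glb. intros [A HA]. cbn.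
      rewrite (H A HA). apply imp_adj1. mle.
    + rewrite <- (spec_Oe y x). apply top_eq. apply meetI_glb. intros [A HA]. cbn.
      rewrite (H A HA). apply imp_adj1. mle.
  - intros p [Pm [Ps Pc]].
    assert (H1 : forall A, Oe e A -> p A = fjoin (fun c : {c | K c} => A (proj1_sig c) ⊓ p (fun x => e (proj1_sig c) x))).
    { intros A HA.
      set (T := fun B => exists c, K c /\ B = Lmeet2 L (Lconst L P (A c)) (fun x => e c x)).
      assert (HTo : forall B, T B -> Oe e B).
      { intros B [c [Hc ->]]. apply Tm; [apply Tc|apply Oe_up, Hc]. }
      assert (HT : A = Lsupset L T).
      { apply functional_extensionality. intros x. rewrite (HA x). apply eq_le.
        - apply join_least. intros [c Hc]. cbn. unfold Lsupset.
          eapply sup_ub'; [exists (Lmeet2 L (Lconst L P (A c)) (fun x => e c x)); split; [exists c; split; [exact Hc|reflexivity]|reflexivity]|].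
          apply le_refl.
        - unfold Lsupset. apply fsup_least. intros a [B [[c [Hc ->]] ->]]. jub (exist _ c Hc). apply le_refl. }
      transitivity (p (Lsupset L T)); [f_equal; exact HT|]. rewrite (Ps T HTo). apply eq_le.
      - apply fsup_least. intros a [B [[c [Hc ->]] ->]]. rewrite Pm by (apply Tc || (apply Oe_up; exact Hc)).
        rewrite Pc. jub (exist _ c Hc). apply le_refl.
      - apply join_least. intros [c Hc]. cbn.
        eapply sup_ub'; [exists (Lmeet2 L (Lconst L P (A c)) (fun x => e c x)); split; [exists c; split; [exact Hc|reflexivity]|reflexivity]|].
        rewrite Pm by (apply Tc || (apply Oe_up; exact Hc)). rewrite Pc. apply le_refl. }
    set (D := fun y => fsup L (fun a => K y /\ a = p (fun x => e y x))).
    assert (D_eq : forall y, K y -> D y = p (fun x => e y x)).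
    { intros y Hy. apply eq_le.
      - unfold D. apply fsup_least. intros a [_ ->]. apply le_refl.
      - unfold D. apply fsup_ub with (S := fun a => K y /\ a = p (fun x => e y x)). auto. }
    assert (HD : Ldirected L e D).
    { split.
      - apply top_eq. unfold Lnonempty. rewrite <- (Pc ftop). rewrite (H1 _ (Tc ftop)).
        apply join_least. intros [c Hc]. cbn. jub c. rewrite (D_eq c Hc). mle.
      - intros y z. unfold D at 1 2. sel a [Hy ->]. sel b [Hz ->].
        apply le_trans with (p (Lmeet2 L (fun x => e y x) (fun x => e z x))).
        { rewrite Pm by (apply Oe_up; assumption). mle. }
        rewrite H1 by (apply Tm; apply Oe_up; assumption).
        apply join_least. intros [c Hc]. cbn. jub c. unfold Lmeet2.
        rewrite (D_eq c Hc). mle. }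
    destruct (proj1 Halg D HD) as [s Hs]. exists s. intros A HA.
    rewrite (H1 A HA), (Oe_scott A D s HA HD Hs). apply eq_le.
    + apply join_least. intros [c Hc]. cbn. jub c. rewrite (D_eq c Hc). mle.
    + apply join_least. intros x. unfold D. sel a [Hx ->]. jub (exist _ x Hx). mle.
Qed.
End Alg.

Section Hom.
Set Default Proof Using "All".
Context {L : frame}.
Local Notation "a ⊑ b" := (fle L a b) (at level 70).
Local Notation "a ⊓ b" := (fmeet L a b) (at level 40, left associativity).
Context {P Q : Type} (e1 : P -> P -> L) (Ho1 : is_Lorder L e1) (Halg1 : Lalgebraic L e1)
  (e2 : Q -> Q -> L) (Ho2 : is_Lorder L e2) (Halg2 : Lalgebraic L e2) (f : P -> Q).

Lemma hom_to_scott : (forall U, Oe e2 U -> Oe e1 (fun x => U (f x))) -> Scott_continuous L e1 e2 f.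
Proof.
  intros HF.
  assert (mono : forall z x, e1 z x ⊑ e2 (f z) (f x)).
  { intros z x. rewrite <- (spec_Oe e2 Ho2 Halg2). apply meetI_glb. intros [U HU]. cbn.
    apply imp_adj1. apply swap_le. apply (Oe_upper e1 Ho1 Halg1 (fun x => U (f x)) z x (HF U HU)). }
  intros D HD x Hx. exists (f x). split; [|reflexivity]. intros y.
  apply eq_le.
  - apply Lsub_intro. intros y'. unfold Ldown. apply swap_le, Lfwd_elim. intros z <-.
    addH (sup_ub L P e1 Ho1 D x z Hx). addH (mono z x). addH (e_trans L Q e2 Ho2 (f z) (f x) y). mle.
  - rewrite <- (spec_Oe e2 Ho2 Halg2). apply meetI_glb. intros [U HU]. cbn. apply imp_adj1.
    assert (E : U (f x) = fjoin (fun z => D z ⊓ U (f z))) by exact (Oe_scott e1 Ho1 Halg1 (fun x => U (f x)) D x (HF U HU) HD Hx).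
    rewrite E. jel z. addH (Lfwd_ub L f D z). addH (Lsub_elim (Lfwd L f D) (Ldown L e2 y) (f z)).
    eapply le_trans; [|apply (Oe_upper e2 Ho2 Halg2 U (f z) y HU)]. mle.
Qed.

Lemma scott_to_hom : Scott_continuous L e1 e2 f -> forall U, Oe e2 U -> Oe e1 (fun x => U (f x)).
Proof.
  intros Hf.
  assert (mono : forall z x, e1 z x ⊑ e2 (f z) (f x)).
  { intros z x. destruct (Hf (Ldown L e1 x) (principal_dir L P e1 Ho1 x) x (principal_sup L P e1 Ho1 x)) as [s [Hs Hfx]].
    rewrite Hfx. eapply le_trans; [|apply (sup_ub L Q e2 Ho2 _ s (f z) Hs)].
    apply (Lfwd_ub L f (Ldown L e1 x) z). }
  assert (dimg : forall D, Ldirected L e1 D -> Ldirected L e2 (Lfwd L f D)).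
  { intros D HD. split.
    - apply top_eq. unfold Lnonempty. rewrite <- (dir_ne L P e1 D HD). apply join_least. intros z.
      eapply le_trans; [apply (Lfwd_ub L f D z)|]. apply (join_ub (Lfwd L f D)).
    - intros y1 y2. apply Lfwd_elim. intros z1 <-. apply swap_le, Lfwd_elim. intros z2 <-.
      addH (dir_dir L P e1 D z1 z2 HD). jel z. jub (f z). apply fmeet_glb; [|apply fmeet_glb].
      + eapply le_trans; [|apply Lfwd_ub]. mle.
      + eapply le_trans; [|apply mono]. mle.
      + eapply le_trans; [|apply mono]. mle. }
  intros U HU x. cbv beta. apply eq_le.
  - destruct (Hf (Lk L e1 x) (k_dir_ e1 Ho1 Halg1 x) x (k_sup_ e1 Ho1 Halg1 x)) as [s [Hs Hfx]].
    rewrite Hfx. rewrite (Oe_scott e2 Ho2 Halg2 U _ s HU (dimg _ (k_dir_ e1 Ho1 Halg1 x)) Hs).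
    apply join_least. intros y. apply Lfwd_elim. intros z <-. apply (Lk_elim e1 Ho1 Halg1). intros Hz.
    jub (exist _ z Hz). mle.
  - apply join_least. intros [c Hc]. cbn. addH (mono c x).
    eapply le_trans; [|apply (Oe_upper e2 Ho2 Halg2 U (f c) (f x) HU)]. mle.
Qed.
End Hom.

Lemma eq_le1 {L : frame} (a b : L) : a = b -> fle L a b.
Proof. intros ->; apply le_refl. Qed.

Section Top.
Set Default Proof Using "All".
Context {L : frame}.
Local Notation "a ⊑ b" := (fle L a b) (at level 70).
Local Notation "a ⊓ b" := (fmeet L a b) (at level 40, left associativity).
Context {X : Type} (O : (X -> L) -> Prop) (Htop : is_Ltopology L O)
  (Hslsc : strong_loc_super_compact L O) (Hsob : Lsober L O).
Local Notation e := (spec O).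
Local Notation up c := (fun z => spec O c z).

Lemma open_upper A x y : O A -> A x ⊓ e x y ⊑ A y.
Proof. intros HA. apply swap_le, imp_adj2.
  apply (meetI_lb (fun B : {B | O B} => fimp (proj1_sig B x) (proj1_sig B y)) (exist _ A HA)). Qed.

Lemma spec_Lorder : is_Lorder L e.
Proof.
  split; [|split].
  - intros x. apply top_eq. apply meetI_glb. intros [A HA]. cbn. apply imp_adj1. mle.
  - intros x y z. apply meetI_glb. intros [A HA]. cbn. apply imp_adj1.
    addH (open_upper A x y HA). addH (open_upper A y z HA). mle.
  - intros x y H. apply (proj1 Hsob). intros A HA.
    assert (H1 : e x y = ftop) by (apply top_eq; rewrite <- H; mle).
    assert (H2 : e y x = ftop) by (apply top_eq; rewrite <- H; mle).
    apply eq_le.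
    + eapply le_trans; [|apply (open_upper A x y HA)]. rewrite H1. mle.
    + eapply le_trans; [|apply (open_upper A y x HA)]. rewrite H2. mle.
Qed.

Lemma Lk_le' x y : Lk L e x y ⊑ e y x.
Proof. unfold Lk. apply fsup_least. intros a [_ ->]. apply le_refl. Qed.
Lemma Lk_eq' x y : Lcompact L e y -> Lk L e x y = e y x.
Proof. intros H. apply eq_le; [apply Lk_le'|]. unfold Lk. apply fsup_ub with (S := fun a => Lcompact L e y /\ a = e y x). auto. Qed.
Lemma Lk_elim' x y b c : (Lcompact L e y -> e y x ⊓ b ⊑ c) -> Lk L e x y ⊓ b ⊑ c.
Proof. intros H. unfold Lk. apply sup_elim. intros a [Hk ->]. auto. Qed.

Lemma base_repr A x : O A -> A x = fjoin (fun c : {c | O (up c)} => A (proj1_sig c) ⊓ e (proj1_sig c) x).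
Proof.
  intros HA. destruct Hslsc as [Bs [[HBo HBase] HBsc]]. apply eq_le.
  - rewrite (HBase A HA x). apply join_least. intros [B HB]. cbn.
    destruct (HBsc B HB) as [_ [Hne Hsc]].
    assert (Hpt : is_point L O (fun A => Lsub L B A)).
    { split; [|split].
      - intros A1 A2 H1 H2. apply eq_le.
        + apply fmeet_glb; apply Lsub_intro; intros z.
          * eapply le_trans; [apply (Lsub_elim B (Lmeet2 L A1 A2) z)|]. unfold Lmeet2. mle.
          * eapply le_trans; [apply (Lsub_elim B (Lmeet2 L A1 A2) z)|]. unfold Lmeet2. mle.
        + apply Lsub_intro. intros z. unfold Lmeet2. apply fmeet_glb.
          * eapply le_trans; [|apply (Lsub_elim B A1 z)]. mle.
          * eapply le_trans; [|apply (Lsub_elim B A2 z)]. mle.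
      - intros S HS. rewrite (Hsc S HS). apply eq_le.
        + apply join_least. intros [V HV]. cbn. eapply sup_ub'; [exists V; split; [exact HV|reflexivity]|]. apply le_refl.
        + apply fsup_least. intros a [V [HV ->]]. jub (exist _ V HV). apply le_refl.
      - intros l. apply eq_le.
        + apply le_trans with (Lsub L B (Lconst L X l) ⊓ fjoin B).
          { apply fmeet_glb; [apply le_refl|]. unfold Lnonempty in Hne. rewrite Hne. apply top_max. }
          apply join_elimR. intros z. apply (Lsub_elim B (Lconst L X l) z).
        + apply Lsub_intro. intros z. unfold Lconst. mle. }
    destruct (proj2 Hsob _ Hpt) as [c Hc].
    assert (HBc : B = up c).
    { apply functional_extensionality. intros z. apply eq_le.
      - apply meetI_glb. intros [A' HA']. cbn. apply imp_adj1. rewrite <- (Hc A' HA').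
        apply swap_le. apply Lsub_elim.
      - assert (HBB : B c = ftop).
        { rewrite <- (Hc B (HBo B HB)). apply top_eq. apply Lsub_intro. intros w. mle. }
        apply le_trans with (e c z ⊓ B c).
        { apply fmeet_glb; [apply le_refl|]. rewrite HBB. apply top_max. }
        apply swap_le. apply (open_upper B c z (HBo B HB)). }
    rewrite (Hc A HA). assert (Hoc : O (up c)) by (rewrite <- HBc; apply HBo, HB).
    jub (exist (fun c => O (up c)) c Hoc). rewrite HBc. apply le_refl.
  - apply join_least. intros [c Hc]. cbn. apply open_upper, HA.
Qed.

Lemma R_meet x b b' : O (up b) -> O (up b') ->
  e b x ⊓ e b' x ⊑ fjoin (fun c : {c | O (up c)} => e b (proj1_sig c) ⊓ e b' (proj1_sig c) ⊓ e (proj1_sig c) x).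
Proof.
  intros H1 H2. apply eq_le1.
  exact (base_repr (Lmeet2 L (up b) (up b')) x (proj1 Htop _ _ H1 H2)).
Qed.
Lemma Kt_ne Y x : Y ⊑ fjoin (fun b : {b | O (up b)} => e (proj1_sig b) x).
Proof.
  eapply le_trans; [apply top_max|]. apply le_trans with (Lconst L X ftop x); [apply le_refl|].
  rewrite (base_repr (Lconst L X ftop) x (proj2 (proj2 Htop) ftop)).
  apply join_least. intros [b Hb]. jub (exist (fun c => O (up c)) b Hb). unfold Lconst. mle.
Qed.

Lemma dir_sup D : Ldirected L e D -> exists s,
  (forall A, O A -> A s = fjoin (fun x => D x ⊓ A x)) /\ is_Lsup L e D s.
Proof.
  intros HD. set (p := fun A : X -> L => fjoin (fun x => D x ⊓ A x)).
  assert (Hpt : is_point L O p).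
  { split; [|split].
    - intros A B HA HB. unfold p. apply eq_le.
      + apply join_least. intros x. unfold Lmeet2. apply fmeet_glb; jub x; mle.
      + jel x. jel y. addH (dir_dir L X e D x y HD). jel z. jub z. unfold Lmeet2.
        apply fmeet_glb; [mle|apply fmeet_glb].
        * eapply le_trans; [|apply (open_upper A x z HA)]. mle.
        * eapply le_trans; [|apply (open_upper B y z HB)]. mle.
    - intros S HS. unfold p. apply eq_le.
      + apply join_least. intros x. unfold Lsupset. sel a [A [HA ->]].
        eapply sup_ub'; [exists A; split; [exact HA|reflexivity]|]. jub x. mle.
      + apply fsup_least. intros a [A [HA ->]]. apply join_least. intros x. jub x.
        apply fmeet_glb; [mle|]. unfold Lsupset. eapply sup_ub'; [exists A; split; [exact HA|reflexivity]|]. mle.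
    - intros l. unfold p, Lconst. apply eq_le.
      + apply join_least. intros x. mle.
      + addH (dir_ne_le L X e D l HD). jel x. jub x. mle. }
  destruct (proj2 Hsob p Hpt) as [s Hs]. exists s. split.
  - intros A HA. symmetry. apply Hs, HA.
  - intros y. apply eq_le.
    + apply Lsub_intro. intros x. unfold Ldown. apply meetI_glb. intros [A HA]. cbn. apply imp_adj1.
      assert (HAs : D x ⊓ A x ⊑ A s) by (rewrite <- (Hs A HA); unfold p; jub x; apply le_refl).
      addH HAs. eapply le_trans; [|apply (open_upper A s y HA)]. mle.
    + apply meetI_glb. intros [A HA]. cbn. apply imp_adj1. rewrite <- (Hs A HA). unfold p.
      jel x. addH (Lsub_elim D (Ldown L e y) x).
      eapply le_trans; [|apply (open_upper A x y HA)]. mle.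
Qed.

Lemma Kt_K c : O (up c) -> Lcompact L e c.
Proof.
  intros Hoc. unfold Lcompact, Lwaybelow. apply top_eq. apply finf_glb.
  intros a [I [s [HI [Hs ->]]]]. apply imp_adj1.
  destruct (dir_sup I (proj1 HI)) as [s' [Hs'1 Hs'2]].
  rewrite (sup_unique L X e spec_Lorder I s s' Hs Hs'2).
  assert (E : e c s' = fjoin (fun x => I x ⊓ e c x)) by exact (Hs'1 _ Hoc).
  rewrite E. apply join_elimR. intros x. eapply le_trans; [|apply (proj2 HI x c)]. mle.
Qed.

Lemma K_Kt c : Lcompact L e c -> O (up c).
Proof.
  intros Hc.
  set (J := fun x y => fjoin (fun b : {b | O (up b)} => e (proj1_sig b) x ⊓ e y (proj1_sig b))).
  assert (HJ : forall x, Lideal L e (J x)).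
  { intros x. split; [split|].
    - apply top_eq. eapply le_trans; [apply (Kt_ne ftop x)|]. apply join_least. intros [b Hb]. cbn.
      jub b. unfold J. jub (exist (fun c => O (up c)) b Hb). apply fmeet_glb; [apply le_refl|apply e_refl_le, spec_Lorder].
    - intros y y'. unfold J at 1 2. jel [b Hb]. jel [b' Hb']. addH (R_meet x b b' Hb Hb').
      jel [c' Hc']. jub c'. apply fmeet_glb; [|apply fmeet_glb].
      + unfold J. jub (exist (fun c => O (up c)) c' Hc'). apply fmeet_glb; [mle|apply e_refl_le, spec_Lorder].
      + addH (e_trans L X e spec_Lorder y b c'). mle.
      + addH (e_trans L X e spec_Lorder y' b' c'). mle.
    - intros y z. unfold J. jel [b Hb]. jub (exist (fun c => O (up c)) b Hb). apply fmeet_glb; [mle|].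
      addH (e_trans L X e spec_Lorder z y b). mle. }
  assert (HJs : forall x, is_Lsup L e (J x) x).
  { intros x y. apply eq_le.
    - apply Lsub_intro. intros z. unfold J, Ldown. jel [b Hb].
      addH (e_trans L X e spec_Lorder z b x). addH (e_trans L X e spec_Lorder z x y). mle.
    - apply meetI_glb. intros [A HA]. cbn. apply imp_adj1. rewrite (base_repr A x HA).
      jel [b Hb].
      assert (Hb' : e b x ⊑ J x b).
      { unfold J. jub (exist (fun c => O (up c)) b Hb). apply fmeet_glb; [apply le_refl|apply e_refl_le, spec_Lorder]. }
      addH Hb'. addH (Lsub_elim (J x) (Ldown L e y) b).
      eapply le_trans; [|apply (open_upper A b y HA)]. mle. }
  assert (Htopc : ftop ⊑ J c c).
  { unfold Lcompact, Lwaybelow in Hc.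
    assert (H : ftop ⊑ fimp (e c c) (J c c)).
    { rewrite <- Hc. apply finf_lb. exists (J c), c. auto. }
    eapply le_trans; [|apply (imp_adj2 _ _ _ H)]. apply fmeet_glb; [apply le_refl|].
    apply e_refl_le, spec_Lorder. }
  set (T := fun B => exists b, O (up b) /\ B = Lmeet2 L (Lconst L X (e b c ⊓ e c b)) (up b)).
  assert (E : up c = Lsupset L T).
  { apply functional_extensionality. intros x. apply eq_le.
    - apply le_trans with (J c c ⊓ e c x).
      { apply fmeet_glb; [eapply le_trans; [apply top_max|exact Htopc]|apply le_refl]. }
      unfold J. jel [b Hb]. unfold Lsupset.
      eapply sup_ub'; [exists (Lmeet2 L (Lconst L X (e b c ⊓ e c b)) (up b)); split; [exists b; split; [exact Hb|reflexivity]|reflexivity]|].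
      unfold Lmeet2, Lconst. apply fmeet_glb; [mle|]. addH (e_trans L X e spec_Lorder b c x). mle.
    - unfold Lsupset. apply fsup_least. intros a [B [[b [Hb ->]] ->]]. unfold Lmeet2, Lconst.
      addH (e_trans L X e spec_Lorder c b x). mle. }
  rewrite E. apply (proj1 (proj2 Htop)). intros B [b [Hb ->]].
  apply (proj1 Htop); [apply (proj2 (proj2 Htop))|exact Hb].
Qed.

Lemma spec_alg : Lalgebraic L e.
Proof.
  split.
  - intros D HD. destruct (dir_sup D HD) as [s [_ Hs]]. exists s. exact Hs.
  - intros x. split; [split|].
    + apply top_eq. eapply le_trans; [apply (Kt_ne ftop x)|]. apply join_least. intros [b Hb]. cbn.
      jub b. rewrite (Lk_eq' x b (Kt_K b Hb)). apply le_refl.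
    + intros y z. apply Lk_elim'. intros Hy. apply swap_le, Lk_elim'. intros Hz.
      addH (R_meet x y z (K_Kt y Hy) (K_Kt z Hz)). jel [b Hb]. jub b.
      rewrite (Lk_eq' x b (Kt_K b Hb)). mle.
    + intros y. apply eq_le.
      * apply Lsub_intro. intros z. unfold Ldown. addH (Lk_le' x z).
        addH (e_trans L X e spec_Lorder z x y). mle.
      * apply meetI_glb. intros [A HA]. cbn. apply imp_adj1. rewrite (base_repr A x HA).
        jel [b Hb].
        assert (Hkb : e b x ⊑ Lk L e x b) by (rewrite (Lk_eq' x b (Kt_K b Hb)); apply le_refl).
        addH Hkb. addH (Lsub_elim (Lk L e x) (Ldown L e y) b).
        eapply le_trans; [|apply (open_upper A b y HA)]. mle.
Qed.

Lemma O_Oe A : O A <-> Oe e A.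
Proof.
  split.
  - intros HA x. apply eq_le.
    + rewrite (base_repr A x HA) at 1. apply join_least. intros [b Hb]. cbn.
      jub (exist (fun c => Lcompact L e c) b (Kt_K b Hb)). apply le_refl.
    + apply join_least. intros [c Hc]. cbn. apply open_upper, HA.
  - intros HA.
    set (T := fun B => exists c, Lcompact L e c /\ B = Lmeet2 L (Lconst L X (A c)) (up c)).
    assert (HT : A = Lsupset L T).
    { apply functional_extensionality. intros x. rewrite (HA x). apply eq_le.
      - apply join_least. intros [c Hc]. cbn. unfold Lsupset.
        eapply sup_ub'; [exists (Lmeet2 L (Lconst L X (A c)) (up c)); split; [exists c; split; [exact Hc|reflexivity]|reflexivity]|].
        apply le_refl.
      - unfold Lsupset. apply fsup_least. intros a [B [[c [Hc ->]] ->]]. jub (exist _ c Hc). apply le_refl. }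
    rewrite HT. apply (proj1 (proj2 Htop)). intros B [c [Hc ->]].
    apply (proj1 Htop); [apply (proj2 (proj2 Htop))|apply K_Kt, Hc].
Qed.
End Top.

Section Main.
Variable L : frame.

Definition Fo (X : SLSCSob L) : AlgDom L :=
  MkAlgDom L (sp_car X) (spec (sp_open X))
    (spec_Lorder (sp_open X) (sp_top L X) (sp_slsc L X) (sp_sober L X))
    (spec_alg (sp_open X) (sp_top L X) (sp_slsc L X) (sp_sober L X)).

Definition Go (P : AlgDom L) : SLSCSob L :=
  MkSLSCSob L (ad_car P) (Oe (ad_ord P))
    (Oe_top (ad_ord P) (ad_Lorder L P) (ad_alg L P))
    (Oe_slsc (ad_ord P) (ad_Lorder L P) (ad_alg L P))
    (Oe_sober (ad_ord P) (ad_Lorder L P) (ad_alg L P)).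

Lemma OO (X : SLSCSob L) A : sp_open X A <-> Oe (spec (sp_open X)) A.
Proof. apply (O_Oe (sp_open X) (sp_top L X) (sp_slsc L X) (sp_sober L X)). Qed.

Definition Fm (X Y : SLSCSob L) (f : SLSCSob_hom X Y) : AlgDom_hom (Fo X) (Fo Y) :=
  exist (fun g : sp_car X -> sp_car Y => Scott_continuous L (spec (sp_open X)) (spec (sp_open Y)) g) (proj1_sig f)
    (hom_to_scott (spec (sp_open X)) (ad_Lorder L (Fo X)) (ad_alg L (Fo X))
       (spec (sp_open Y)) (ad_Lorder L (Fo Y)) (ad_alg L (Fo Y)) (proj1_sig f)
       (fun U HU => proj1 (OO X _) (proj2_sig f U (proj2 (OO Y U) HU)))).

Definition Gm (X Y : SLSCSob L) (h : AlgDom_hom (Fo X) (Fo Y)) : SLSCSob_hom X Y :=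
  exist (fun g : sp_car X -> sp_car Y => Lcontinuous L (sp_open X) (sp_open Y) g) (proj1_sig h)
    (fun B HB => proj2 (OO X _)
       (scott_to_hom (spec (sp_open X)) (ad_Lorder L (Fo X)) (ad_alg L (Fo X))
          (spec (sp_open Y)) (ad_Lorder L (Fo Y)) (ad_alg L (Fo Y)) (proj1_sig h)
          (proj2_sig h) B (proj1 (OO Y B) HB))).

Lemma GoFo X : Go (Fo X) = X.
Proof.
  destruct X as [car O t s so]. unfold Go, Fo. cbn.
  assert (E : Oe (spec O) = O).
  { apply functional_extensionality. intros A. apply propositional_extensionality.
    symmetry. apply (O_Oe O t s so). }
  generalize (Oe_top (spec O) (spec_Lorder O t s so) (spec_alg O t s so))
             (Oe_slsc (spec O) (spec_Lorder O t s so) (spec_alg O t s so))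
             (Oe_sober (spec O) (spec_Lorder O t s so) (spec_alg O t s so)).
  rewrite E. intros. f_equal; apply proof_irrelevance.
Qed.

Lemma FoGo P : Fo (Go P) = P.
Proof.
  destruct P as [car e Ho Halg]. unfold Go, Fo. cbn.
  assert (E : spec (Oe e) = e).
  { apply functional_extensionality. intros x. apply functional_extensionality. intros y.
    apply (spec_Oe e Ho Halg). }
  generalize (spec_Lorder (Oe e) (Oe_top e Ho Halg) (Oe_slsc e Ho Halg) (Oe_sober e Ho Halg))
             (spec_alg (Oe e) (Oe_top e Ho Halg) (Oe_slsc e Ho Halg) (Oe_sober e Ho Halg)).
  rewrite E. intros. f_equal; apply proof_irrelevance.
Qed.
End Main.

Theorem theorem5p11 : forall L : frame, SLSCSob_AlgDom_isomorphic L.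
Proof.
  intros L. exists (Fo L), (Fm L). split; [|split; [|split]].
  - intros X i Hi p. cbn. apply Hi.
  - intros X Y Z f g h Hh p. cbn. apply Hh.
  - exists (Go L). split; [apply GoFo|apply FoGo].
  - intros X Y. exists (Gm L X Y). split.
    + intros [f Hf]. unfold Gm, Fm. cbn. f_equal. apply proof_irrelevance.
    + intros [h Hh]. unfold Gm, Fm. cbn. f_equal. apply proof_irrelevance.
Qed.
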